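(* Any solution $(\phi^{n+1},\mu^{n+1})\in\Phi_h\times M_h$ of the J$_\varepsilon$-scheme satisfies $$\int_\Omega\phi^{n+1}\,d\boldsymbol x=\int_\Omega\phi^n\,d\boldsymbol x$$ and $$\delta_tE(\phi^{n+1})+\int_\Omega M^J_\varepsilon(\phi^{n+1})|\nabla\mu^{n+1}|^2\,d\boldsymbol x\le0,$$ where $E(\phi)=\int_\Omega\big(\frac12|\nabla\phi|^2+F(\phi)\big)d\boldsymbol x$ and $M^J_\varepsilon(\phi^{n+1})|\nabla\mu^{n+1}|^2$ means $\big(M^J_\varepsilon(\phi^{n+1})\nabla\mu^{n+1}\big)\cdot\nabla\mu^{n+1}$.
   Context: $\Omega\subset\mathbb{R}^d$ ($d=1,2,3$) bounded, $\eta>0$, $\varepsilon\in(0,1/2)$. $F(\phi)=\frac1{4\eta^2}\phi^2(\phi-1)^2=F_c+F_e$ with $F_c(\phi)=\frac1{4\eta^2}(\phi^4-2\phi^3+\frac32\phi^2)$, $F_e(\phi)=-\frac1{8\eta^2}\phi^2$. $\Delta t=T/N$, $\delta_tf^{n+1}=(f^{n+1}-f^n)/\Delta t$. $\mathcal T_h$ is a structured triangulation of $\Omega$ in which every element $I$ has vertices $\boldsymbol x_0,\dots,\boldsymbol x_d$ with $\boldsymbol x_k-\boldsymbol x_0$ parallel to the $k$-th coordinate axis. $\Phi_h$ is the space of continuous piecewise $\mathbb{P}_1$ functions, $M_h$ the space of continuous piecewise $\mathbb{P}_k$ functions ($k\ge1$). $I_h$ is nodal $\mathbb{P}_1$ interpolation,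 $(f,g)_h=\int_\Omega I_h(fg)\,d\boldsymbol x$, $(\cdot,\cdot)$ the $L^2$ product. Let $J(\phi)=(1-2\phi)\arcsin(\sqrt{1-\phi})+\sqrt{(1-\phi)\phi}+2\arcsin(\sqrt{1/2})\,\phi$ on $[0,1]$ (so $J''(\phi)=1/\sqrt{\phi(1-\phi)}$), and $J_\varepsilon\in C^2(\mathbb{R})$ equal to $J$ on $[\varepsilon,1-\varepsilon]$ and to its second-order Taylor polynomial at $\varepsilon$ (resp. $1-\varepsilon$) for $\phi<\varepsilon$ (resp. $\phi>1-\varepsilon$). For $\phi\in\Phi_h$, $M^J_\varepsilon(\phi)$ is the piecewise constant diagonal matrix whose $k$-th entry on $I$ is $\Big(\frac{\phi(\boldsymbol x_k)-\phi(\boldsymbol x_0)}{J_\varepsilon'(\phi(\boldsymbol x_k))-J_\varepsilon'(\phi(\boldsymbol x_0))}\Big)^2$ if $\phi(\boldsymbol x_k)\neq\phi(\boldsymbol x_0)$ and $\big(1/J_\varepsilon''(\phi(\boldsymbol x_0))\big)^2$ otherwise. J$_\varepsilon$-scheme: given $\phi^n\in\Phi_h$, find $(\phi^{n+1},\mu^{n+1})\in\Phi_h\times M_h$ such that for all $(\bar\phi,\bar\mu)\in\Phi_h\times M_h$: $\frac1{\Delta t}(\phi^{n+1}-\phi^n,\bar\mu)_h+(M^J_\varepsilon(\phi^{n+1})\nabla\mu^{n+1},\nabla\bar\mu)=0$ and $(\nabla\phi^{n+1},\nabla\bar\phi)+(F_c'(\phi^{n+1})+F_e'(\phi^n),\bar\phi)=(\mu^{n+1},\bar\phi)_h$.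 *)

(* Defs.v *)
From HB Require Import structures.
From mathcomp Require Import all_boot all_order all_algebra.
From mathcomp Require Import all_classical all_reals all_analysis.
Set Implicit Arguments. Unset Strict Implicit. Unset Printing Implicit Defensive.
Import Order.TTheory GRing.Theory Num.Theory.
Import numFieldNormedType.Exports.
Local Open Scope classical_set_scope.
Local Open Scope ring_scope.

Section Defs.
Variable R : realType.

(* d-dimensional integral over R^d, defined as the iterated one-dimensional
   Lebesgue integrals (Fubini); the first coordinate is integrated last. *)
Fixpoint iint (d : nat) : ('rV[R]_d -> R) -> R :=
  match d return ('rV[R]_d -> R) -> R with
  | 0 => fun f => f 0
  | d'.+1 => fun f =>
      Rintegral (@lebesgue_measure R) setT
        (fun s : R => iint (fun y : 'rV[R]_d' => f (row_mx (const_mx s : 'rV[R]_1) y)))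
  end.

Definition int_on (d : nat) (A : set 'rV[R]_d) (f : 'rV[R]_d -> R) : R :=
  iint (fun x => \1_A x * f x).

(* An element with vertices x_0 = x0 and x_k = x0 + h_k e_k (k-th axis). *)
Definition axis (d : nat) (i : 'I_d) : 'rV[R]_d := delta_mx 0 i.

Definition vtx (d : nat) (x0 h : 'rV[R]_d) (k : 'I_d) : 'rV[R]_d :=
  x0 + h 0 k *: axis k.

Definition vtxo (d : nat) (x0 h : 'rV[R]_d) (o : option 'I_d) : 'rV[R]_d :=
  if o is Some k then vtx x0 h k else x0.

Definition simplex (d : nat) (x0 h : 'rV[R]_d) : set 'rV[R]_d :=
  [set x | exists t : 'rV[R]_d, (forall k, 0 <= t 0 k) /\ \sum_k t 0 k <= 1 /\
           x = x0 + \row_k (t 0 k * h 0 k)].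

Definition simplex_int (d : nat) (x0 h : 'rV[R]_d) : set 'rV[R]_d :=
  [set x | exists t : 'rV[R]_d, (forall k, 0 < t 0 k) /\ \sum_k t 0 k < 1 /\
           x = x0 + \row_k (t 0 k * h 0 k)].

Definition conv_vtx (d : nat) (x0 h : 'rV[R]_d) (P : option 'I_d -> Prop)
  : set 'rV[R]_d :=
  [set x | exists w : option 'I_d -> R, (forall o, 0 <= w o) /\
     \sum_(o : option 'I_d) w o = 1 /\ (forall o, ~ P o -> w o = 0) /\
     x = \sum_(o : option 'I_d) w o *: vtxo x0 h o].

(* A structured triangulation of Omega with element set E: every element is
   a nondegenerate simplex with edges x_k - x_0 parallel to the k-th axis,
   Omega is the union of the elements, and the mesh is conforming (two
   distinct elements meet in the convex hull of their common vertices,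
   i.e. in a common face, possibly empty). *)
Definition structured_triangulation (d : nat) (E : finType)
  (x0 h : E -> 'rV[R]_d) (Omega : set 'rV[R]_d) : Prop :=
  [/\ forall e k, h e 0 k != 0,
      Omega = \bigcup_(e in [set: E]) simplex (x0 e) (h e) &
      forall e e', e != e' ->
        simplex (x0 e) (h e) `&` simplex (x0 e') (h e') =
        conv_vtx (x0 e) (h e)
          (fun o => exists o', vtxo (x0 e') (h e') o' = vtxo (x0 e) (h e) o)].

Definition is_poly_le (d k : nat) (p : 'rV[R]_d -> R) : Prop :=
  exists c : {ffun 'I_d -> 'I_k.+1} -> R, forall x,
    p x = \sum_(a : {ffun 'I_d -> 'I_k.+1} | (\sum_i (a i : nat) <= k)%N)
            c a * \prod_i x 0 i ^+ a i.

(* continuous piecewise P_k functions on the mesh (as a single-valued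
   function on R^d, continuity across elements is automatic; values outside
   Omega are irrelevant) *)
Definition pw_poly (d k : nat) (E : finType) (x0 h : E -> 'rV[R]_d)
  (u : 'rV[R]_d -> R) : Prop :=
  forall e, exists p, is_poly_le k p /\ forall x, simplex (x0 e) (h e) x -> u x = p x.

Definition grad (d : nat) (u : 'rV[R]_d -> R) (x : 'rV[R]_d) : 'rV[R]_d :=
  \row_i 'D_(axis i) u x.

Definition dotv (d : nat) (a b : 'rV[R]_d) : R := \sum_i a 0 i * b 0 i.

(* integral over Omega of a function, as sum of integrals over the (open)
   elements; for a conforming mesh this is the Lebesgue integral over Omega
   since element boundaries are null sets *)
Definition intO (d : nat) (E : finType) (x0 h : E -> 'rV[R]_d)
  (f : 'rV[R]_d -> R) : R :=
  \sum_e int_on (simplex_int (x0 e) (h e)) f.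

Definition interp (d : nat) (x0 h : 'rV[R]_d) (g : 'rV[R]_d -> R) (x : 'rV[R]_d)
  : R :=
  g x0 + \sum_k (g (vtx x0 h k) - g x0) * ((x - x0) 0 k / h 0 k).

Definition lumped (d : nat) (E : finType) (x0 h : E -> 'rV[R]_d)
  (f g : 'rV[R]_d -> R) : R :=
  \sum_e int_on (simplex_int (x0 e) (h e)) (interp (x0 e) (h e) (fun x => f x * g x)).

Definition Fdw (eta : R) (p : R) : R := (4 * eta ^+ 2)^-1 * (p ^+ 2 * (p - 1) ^+ 2).
Definition Fc (eta : R) (p : R) : R :=
  (4 * eta ^+ 2)^-1 * (p ^+ 4 - 2 * p ^+ 3 + 3 / 2 * p ^+ 2).
Definition Fe (eta : R) (p : R) : R := - (8 * eta ^+ 2)^-1 * p ^+ 2.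

Definition Jfun (p : R) : R :=
  (1 - 2 * p) * asin (Num.sqrt (1 - p)) + Num.sqrt ((1 - p) * p)
  + 2 * asin (Num.sqrt (1 / 2)) * p.

Definition Jeps (eps : R) (p : R) : R :=
  if p < eps then
    Jfun eps + derive1 Jfun eps * (p - eps) + derive1 (derive1 Jfun) eps / 2 * (p - eps) ^+ 2
  else if 1 - eps < p then
    Jfun (1 - eps) + derive1 Jfun (1 - eps) * (p - (1 - eps))
    + derive1 (derive1 Jfun) (1 - eps) / 2 * (p - (1 - eps)) ^+ 2
  else Jfun p.

Definition MJ (eps : R) (d : nat) (x0 h : 'rV[R]_d) (phi : 'rV[R]_d -> R)
  (k : 'I_d) : R :=
  let a := phi x0 in let b := phi (vtx x0 h k) in
  if b != a then ((b - a) / (derive1 (Jeps eps) b - derive1 (Jeps eps) a)) ^+ 2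
  else (derive1 (derive1 (Jeps eps)) a)^-1 ^+ 2.

Definition Mform (eps : R) (d : nat) (E : finType) (x0 h : E -> 'rV[R]_d)
  (phi u v : 'rV[R]_d -> R) : R :=
  \sum_e int_on (simplex_int (x0 e) (h e))
    (fun x => \sum_k MJ eps (x0 e) (h e) phi k * (grad u x) 0 k * (grad v x) 0 k).

Definition energy (eta : R) (d : nat) (E : finType) (x0 h : E -> 'rV[R]_d)
  (phi : 'rV[R]_d -> R) : R :=
  intO x0 h (fun x => 1 / 2 * dotv (grad phi x) (grad phi x) + Fdw eta (phi x)).

End Defs.

(* Main.v *)
Require Import Defs.
From HB Require Import structures.
From mathcomp Require Import all_boot all_order all_algebra.
From mathcomp Require Import all_classical all_reals all_analysis.
From mathcomp Require Import measurable_realfun.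
From mathcomp Require Import ring lra.
Import Order.TTheory GRing.Theory Num.Theory.
Import numFieldNormedType.Exports.
Local Open Scope classical_set_scope.
Local Open Scope ring_scope.
Set Implicit Arguments. Unset Strict Implicit. Unset Printing Implicit Defensive.

Section Integ.
Variable R : realType.

Definition sec (d : nat) (f : 'rV[R]_d.+1 -> R) (s : R) : 'rV[R]_d -> R :=
  fun y => f (row_mx (const_mx s : 'rV[R]_1) y).

Lemma iintS d (f : 'rV[R]_d.+1 -> R) :
  iint f = Rintegral (@lebesgue_measure R) setT (fun s : R => iint (sec f s)).
Proof. by []. Qed.

Lemma iint0 d : iint (fun _ : 'rV[R]_d => 0) = 0.
Proof.
elim: d => [//|d IH]; rewrite iintS /sec.
transitivity (Rintegral (@lebesgue_measure R) setT (fun _ : R => 0 : R)).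
  by apply: eq_Rintegral => s _; exact: IH.
by rewrite Rintegral_cst // mul0r.
Qed.

Lemma LIM1 (x : R) (u : nat -> R) :
  (forall e, 0 < e -> exists N, forall n, (N <= n)%N -> x - e < u n) ->
  (x%:E <= limn_einf (fun n => (u n)%:E))%E.
Proof.
move=> H.
rewrite limn_einf_lim (cvg_lim _ (@cvg_einfs_sup _ _)) //.
apply/lee_addgt0Pr => e e0.
have [N HN] := H e e0.
apply: (@le_trans _ _ (einfs (fun n => (u n)%:E) N + e%:E)); last first.
  by apply: leeD2r; apply: ereal_sup_ubound; exists N.
rewrite -leeBlDr //.
apply: le_ereal_inf_tmp => _ [n /= Nn <-].
rewrite -EFinB lee_fin ltW //; exact: HN.
Qed.

Lemma LIM2 (x : R) (u : nat -> R) :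
  (x%:E <= limn_einf (fun n => (u n)%:E))%E ->
  (forall e, 0 < e -> exists N, forall n, (N <= n)%N -> x - e < u n).
Proof.
rewrite limn_einf_lim (cvg_lim _ (@cvg_einfs_sup _ _)) // => H e e0.
have : ((x - e)%:E < ereal_sup (range (einfs (fun n => (u n)%:E))))%E.
  by apply: lt_le_trans H; rewrite lte_fin ltrBlDr ltrDl.
move=> /ereal_sup_gt [_ [N _ <-] HN].
exists N => n Nn.
rewrite -lte_fin; apply: (lt_le_trans HN).
by apply: ereal_inf_lbound; exists n.
Qed.


Definition nearv d (x y : 'rV[R]_d) (del : R) := forall i, `|y 0 i - x 0 i| < del.
Definition lscv d (f : 'rV[R]_d -> R) := forall x e, 0 < e ->
  exists2 del, 0 < del & forall y, nearv x y del -> f x - e < f y.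
Definition LF d (M B : R) (f : 'rV[R]_d -> R) :=
  [/\ forall x, 0 <= f x <= M, forall (x : 'rV[R]_d) i, B < `|x 0 i| -> f x = 0 & lscv f].

Lemma row_mx_r d (s : R) (y : 'rV[R]_d) i :
  (row_mx (const_mx s : 'rV[R]_1) y) 0 (rshift 1 i) = y 0 i.
Proof. by rewrite row_mxEr. Qed.

Lemma row_mx_l d (s : R) (y : 'rV[R]_d) :
  (row_mx (const_mx s : 'rV[R]_1) y) 0 (@lshift 1 d ord0) = s.
Proof. by rewrite row_mxEl mxE. Qed.

Lemma nearv_row d (s t : R) (y y' : 'rV[R]_d) del :
  `|t - s| < del -> nearv y y' del ->
  nearv (row_mx (const_mx s : 'rV[R]_1) y) (row_mx (const_mx t : 'rV[R]_1) y') del.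
Proof.
move=> Hst Hy i; rewrite !mxE; case: (fintype.split i) => j; rewrite ?mxE //.
Qed.

Lemma LF_sec d M B (f : 'rV[R]_d.+1 -> R) s : LF M B f -> LF M B (sec f s).
Proof.
case=> H1 H2 H3; split.
- by move=> x; exact: H1.
- by move=> x i Hi; apply: (H2 _ (rshift 1 i)); rewrite row_mx_r.
- move=> y e e0; have [del del0 Hd] := H3 (row_mx (const_mx s : 'rV[R]_1) y) e e0.
  exists del => // y' Hy; apply: Hd; apply: nearv_row => //.
  by rewrite subrr normr0.
Qed.

Lemma LF_sec_out d M B (f : 'rV[R]_d.+1 -> R) s :
  LF M B f -> B < `|s| -> sec f s = (fun _ => 0).
Proof.
case=> _ H2 _ Hs; apply: funext => y; rewrite /sec /=; have := H2 (row_mx (const_mx s : 'rV[R]_1) y) (@lshift 1 d ord0); apply.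
by rewrite row_mx_l.
Qed.

Lemma LF_le_B d M B B' (f : 'rV[R]_d -> R) : B <= B' -> LF M B f -> LF M B' f.
Proof.
move=> BB [H1 H2 H3]; split => // x i Hi; apply: (H2 x i).
exact: le_lt_trans Hi.
Qed.

Definition Fat d := forall (g : nat -> 'rV[R]_d -> R) f M B,
  (forall n, LF M B (g n)) -> LF M B f ->
  (forall y e, 0 < e -> exists N, forall n, (N <= n)%N -> f y - e < g n y) ->
  forall e, 0 < e -> exists N, forall n, (N <= n)%N -> iint f - e < iint (g n).

Lemma lsc_secint d : Fat d -> forall M B (f : 'rV[R]_d.+1 -> R), LF M B f ->
  lower_semicontinuous (fun s : R => (iint (sec f s))%:E).
Proof.
move=> Fd M B f Lf s a; rewrite lte_fin => aG.
have [del del0 Hd] : exists2 del : R, 0 < del &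
    forall t : R, `|s - t| < del -> a < iint (sec f t); last first.
  exists (ball s del); first exact: nbhsx_ballx.
  by move=> t; rewrite -ball_normE /= => Hst; rewrite lte_fin; exact: Hd.
apply: contrapT => Hn.
have Hseq : forall n : nat, exists t : R,
    `|s - t| < n.+1%:R^-1 /\ iint (sec f t) <= a.
  move=> n; apply: contrapT => Hn'; apply: Hn.
  exists n.+1%:R^-1; first by rewrite invr_gt0.
  move=> t Hst.
  rewrite ltNge; apply/negP => Ht; apply: Hn'; exists t; split => //.
have [t Ht] := choice Hseq.
have Lfn : forall n, LF M B (sec f (t n)) by move=> n; exact: LF_sec.
have Hpt : forall y e, 0 < e -> exists N, forall n, (N <= n)%N ->
    sec f s y - e < sec f (t n) y.
  move=> y e e0.
  have [del del0 Hd] := (let: And3 _ _ H3 := Lf in H3) (row_mx (const_mx s : 'rV[R]_1) y) e e0.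
  have [N _ HN] := near_infty_natSinv_lt (PosNum del0).
  exists N => n Nn; apply: Hd; apply: nearv_row; last first.
    by move=> i; rewrite subrr normr0.
  rewrite distrC; apply: (lt_trans (proj1 (Ht n))).
  exact: HN.
have e0 : 0 < iint (sec f s) - a by rewrite subr_gt0.
have [N HN] := Fd _ _ _ _ Lfn (LF_sec s Lf) Hpt _ e0.
have := HN N (leqnn N); rewrite opprB addrCA subrr addr0.
by rewrite ltNge (proj2 (Ht N)).
Qed.

Lemma meas_secint d : Fat d -> forall M B (f : 'rV[R]_d.+1 -> R), LF M B f ->
  measurable_fun setT (fun s : R => iint (sec f s)).
Proof.
move=> Fd M B f Lf; apply/measurable_realfun.measurable_EFinP.
exact: measurable_realfun.lower_semicontinuous_measurable (lsc_secint Fd Lf).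
Qed.


Lemma leb_itv_fin (B : R) : ((@lebesgue_measure R) (`[-B, B]%classic : set R) < +oo%E)%O.
Proof.
have := lebesgue_measure_itv `[-B, B]%R.
by move=> /= ->; case: ifP => _; rewrite ?ltry.
Qed.

Lemma integ_box (G : R -> R) C B : 0 <= B ->
  measurable_fun setT G -> (forall s, 0 <= G s <= C) ->
  (forall s, B < `|s| -> G s = 0) ->
  (@lebesgue_measure R).-integrable setT (EFin \o G).
Proof.
move=> B0 mG HG HB.
have -> : EFin \o G = (EFin \o G) \_ `[-B, B].
  apply: funext => x; rewrite patchE; case: ifPn => // /negP Hx.
  rewrite /= HB //; rewrite ltNge; apply/negP => Hb; apply: Hx.
  by rewrite inE /= in_itv /= -ler_norml.
apply/(integrable_mkcond _ _).1 => //.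
apply: measurable_bounded_integrable => //.
- have := lebesgue_measure_itv `[-B, B]%R.
  by move=> /= ->; case: ifP => _; rewrite ?ltry.
- exact: measurable_funS mG.
- exists C; split; first exact: num_real.
  move=> M CM x _ /=; apply: le_trans (ltW CM).
  by have /andP[G0 GC] := HG x; rewrite ger0_norm.
Qed.


Definition Bnd d := forall M B (f : 'rV[R]_d -> R), 0 <= B -> LF M B f ->
  0 <= iint f <= M * (B *+ 2) ^+ d.
Definition Lin d := forall M B M' B' (f g : 'rV[R]_d -> R), LF M B f -> LF M' B' g ->
  iint (fun x => f x - g x) = iint f - iint g.
Definition Mono d := forall M B M' B' (f g : 'rV[R]_d -> R), LF M B f -> LF M' B' g ->
  (forall x, f x <= g x) -> iint f <= iint g.

Lemma integ_secint d M B (f : 'rV[R]_d.+1 -> R) : Fat d -> Bnd d -> LF M B f ->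
  (@lebesgue_measure R).-integrable setT (EFin \o (fun s => iint (sec f s))).
Proof.
move=> Fd Bd Lf.
have B0 : 0 <= Num.max B 0 by rewrite le_max lexx orbT.
have Lf' : LF M (Num.max B 0) f by apply: LF_le_B Lf; rewrite le_max lexx.
apply: (@integ_box _ (M * (Num.max B 0 *+ 2) ^+ d) (Num.max B 0)) => //.
- exact: (meas_secint Fd Lf).
- by move=> s; apply: Bd => //; exact: LF_sec.
- by move=> s Hs; rewrite (LF_sec_out Lf') // iint0.
Qed.

Lemma Rint_EFin (G : R -> R) :
  (@lebesgue_measure R).-integrable setT (EFin \o G) ->
  (Rintegral (@lebesgue_measure R) setT G)%:E = (\int[@lebesgue_measure R]_(x in setT) (G x)%:E)%E.
Proof. by move=> iG; rewrite /Rintegral fineK //; exact: integrable_fin_num iG. Qed.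

Lemma all_props d : [/\ Fat d, Bnd d, Lin d & Mono d].
Proof.
elim: d => [|d [Fd Bd Ld Md]].
  split.
  - by move=> g f M B _ _ H e e0; exact: H.
  - by move=> M B f _ [H1 _ _]; rewrite expr0 mulr1; exact: H1.
  - by [].
  - by move=> M B M' B' f g _ _ H; exact: H.
split.
- move=> g f M B Lg Lf H.
  pose G n s := iint (sec (g n) s).
  pose G0 s := iint (sec f s).
  have Hpt : forall s e, 0 < e -> exists N, forall n, (N <= n)%N -> G0 s - e < G n s.
    move=> s e' e'0; apply: (Fd (fun n => sec (g n) s) (sec f s) M B) => //.
    - by move=> n; apply: LF_sec.
    - exact: LF_sec.
    - by move=> y e1 e10; exact: H.
  have B0 : 0 <= Num.max B 0 by rewrite le_max lexx orbT.
  have Lg' : forall n, LF M (Num.max B 0) (g n).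
    by move=> n; apply: LF_le_B (Lg n); rewrite le_max lexx.
  have Lf' : LF M (Num.max B 0) f by apply: LF_le_B Lf; rewrite le_max lexx.
  have mG : forall n, measurable_fun setT (fun s => (G n s)%:E).
    by move=> n; apply/measurable_realfun.measurable_EFinP; exact: (meas_secint Fd (Lg n)).
  have G0n : forall n s, setT s -> (0 <= (G n s)%:E)%E.
    move=> n s _; rewrite lee_fin.
    by have /andP[] := Bd _ _ (sec (g n) s) B0 (LF_sec s (Lg' n)).
  have Fa := fatou (@lebesgue_measure R) measurableT mG G0n.
  apply: LIM2.
  have -> : (fun n => (iint (g n))%:E) = (fun n => \int[@lebesgue_measure R]_(x in setT) (G n x)%:E)%E.
    apply: funext => n; rewrite iintS Rint_EFin //.
    exact: integ_secint Fd Bd (Lg n).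
  apply: le_trans Fa.
  rewrite iintS Rint_EFin; last exact: integ_secint Fd Bd Lf.
  apply: ge0_le_integral => //.
  - move=> s _; rewrite lee_fin.
    by have /andP[] := Bd _ _ (sec f s) B0 (LF_sec s Lf').
  - by apply/measurable_realfun.measurable_EFinP; exact: (meas_secint Fd Lf).
  - apply: measurableT_comp; first exact: measurable_realfun.oppe_measurable.
    apply: (measurable_fun_limn_esup (f := fun n s => - (G n s)%:E)%E).
    move=> n; apply: measurableT_comp; first exact: measurable_realfun.oppe_measurable.
    exact: mG.
  - by move=> s _; apply: LIM1; exact: Hpt.
- move=> M B f B0 Lf; rewrite iintS.
  pose C := M * (B *+ 2) ^+ d.
  have GB : forall s, 0 <= iint (sec f s) <= C.
    by move=> s; apply: Bd => //; exact: LF_sec.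
  have C0 : 0 <= C by have /andP[H1 H2] := GB 0; exact: le_trans H2.
  apply/andP; split.
    by apply: Rintegral_ge0 => s _; have /andP[] := GB s.
  have -> : Rintegral (@lebesgue_measure R) setT (fun s => iint (sec f s)) =
            Rintegral (@lebesgue_measure R) `[-B, B] (fun s => iint (sec f s)).
    rewrite [RHS]Rintegral_mkcond; apply: eq_Rintegral => s _.
    rewrite patchE; case: ifPn => // /negP Hx.
    rewrite (LF_sec_out Lf) ?iint0 //.
    rewrite ltNge; apply/negP => Hb; apply: Hx.
    by rewrite inE /= in_itv /= -ler_norml.
  apply: (@le_trans _ _ (Rintegral (@lebesgue_measure R) `[-B, B] (fun _ => C))).
    apply: le_Rintegral => //.
    - apply: measurable_bounded_integrable => //.
      + exact: leb_itv_fin.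
      + apply: measurable_funS (meas_secint Fd Lf) => //.
      + exists C; split; first exact: num_real.
        move=> M' CM x _ /=; apply: le_trans (ltW CM).
        by have /andP[G0 GC] := GB x; rewrite ger0_norm.
    - apply: measurable_bounded_integrable => //.
      + exact: leb_itv_fin.
      + exists C; split; first exact: num_real.
        by move=> M' CM x _ /=; apply: le_trans (ltW CM); rewrite ger0_norm.
    - by move=> s _; have /andP[] := GB s.
  rewrite Rintegral_cst // exprSr mulrA ler_wpM2l //.
  have := lebesgue_measure_itv `[-B, B]%R.
  move=> /= ->; case: ifP => _ /=.
    by rewrite opprK mulr2n.
  by rewrite mulr2n addr_ge0.
- move=> M B M' B' f g Lf Lg; rewrite !iintS.
  rewrite -RintegralB //; [|exact: integ_secint Fd Bd Lf|exact: integ_secint Fd Bd Lg].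
  apply: eq_Rintegral => s _.
  exact: Ld _ _ _ _ _ _ (LF_sec s Lf) (LF_sec s Lg).
- move=> M B M' B' f g Lf Lg H; rewrite !iintS.
  apply: le_Rintegral => //; [exact: integ_secint Fd Bd Lf|exact: integ_secint Fd Bd Lg|].
  move=> s _; apply: (Md _ _ _ _ _ _ (LF_sec s Lf) (LF_sec s Lg)).
  by move=> y; exact: H.
Qed.


Lemma maxr0_lsc (x y e : R) : 0 < e -> x - e < y -> Num.max x 0 - e < Num.max y 0.
Proof.
move=> e0 H; case: (lerP x 0) => Hx; case: (lerP y 0) => Hy; lra.
Qed.

Lemma maxr0_sub (x : R) : x = Num.max x 0 - Num.max (- x) 0.
Proof. case: (lerP x 0) => Hx; case: (lerP (- x) 0) => Hy; lra. Qed.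

Lemma nearv_le d (x y : 'rV[R]_d) a b : a <= b -> nearv x y a -> nearv x y b.
Proof. by move=> ab H i; apply: lt_le_trans (H i) ab. Qed.

Lemma LF_add d M B M' B' (f g : 'rV[R]_d -> R) : LF M B f -> LF M' B' g ->
  LF (M + M') (Num.max B B') (fun x => f x + g x).
Proof.
case=> [F1 F2 F3] [G1 G2 G3]; split.
- move=> x; have /andP[a1 a2] := F1 x; have /andP[b1 b2] := G1 x.
  by rewrite addr_ge0 //= lerD.
- by move=> x i; rewrite gt_max => /andP[h1 h2]; rewrite (F2 x i h1) (G2 x i h2) addr0.
- move=> x e e0.
  have e20 : 0 < e / 2 by rewrite divr_gt0.
  have [d1 d10 H1] := F3 x _ e20; have [d2 d20 H2] := G3 x _ e20.
  exists (Num.min d1 d2); first by rewrite lt_min d10 d20.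
  move=> y Hy.
  have Hy1 : nearv x y d1 by apply: nearv_le Hy; rewrite ge_min lexx.
  have Hy2 : nearv x y d2 by apply: nearv_le Hy; rewrite ge_min lexx orbT.
  have := H1 y Hy1; have := H2 y Hy2.
  move=> h2 h1; lra.
Qed.


Definition Lfun d (f : 'rV[R]_d -> R) := exists M B, LF M B f.
Definition Good d (f : 'rV[R]_d -> R) :=
  exists a b, [/\ Lfun a, Lfun b & forall x, f x = a x - b x].

Lemma Lfun_add d (f g : 'rV[R]_d -> R) : Lfun f -> Lfun g -> Lfun (fun x => f x + g x).
Proof. by move=> [M [B Hf]] [M' [B' Hg]]; exists (M + M'), (Num.max B B'); exact: LF_add. Qed.

Lemma Lfun_lin d (f g : 'rV[R]_d -> R) : Lfun f -> Lfun g ->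
  iint (fun x => f x - g x) = iint f - iint g.
Proof.
move=> [M [B Hf]] [M' [B' Hg]]; have [_ _ L _] := all_props d; exact: L _ _ _ _ _ _ Hf Hg.
Qed.

Lemma Lfun_mono d (f g : 'rV[R]_d -> R) : Lfun f -> Lfun g -> (forall x, f x <= g x) ->
  iint f <= iint g.
Proof.
move=> [M [B Hf]] [M' [B' Hg]]; have [_ _ _ L] := all_props d; exact: L _ _ _ _ _ _ Hf Hg.
Qed.

Lemma Lfun_add_iint d (f g : 'rV[R]_d -> R) : Lfun f -> Lfun g ->
  iint (fun x => f x + g x) = iint f + iint g.
Proof.
move=> Lf Lg; have := Lfun_lin (Lfun_add Lf Lg) Lg.
have -> : (fun x => f x + g x - g x) = f by apply: funext => x; rewrite addrK.
by move=> ->; rewrite subrK.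
Qed.

Lemma Good_iint d (f a b : 'rV[R]_d -> R) : Lfun a -> Lfun b -> (forall x, f x = a x - b x) ->
  iint f = iint a - iint b.
Proof. by move=> La Lb H; rewrite -Lfun_lin //; congr iint; apply: funext. Qed.

Lemma Good_add d (f g : 'rV[R]_d -> R) : Good f -> Good g ->
  Good (fun x => f x + g x) /\ iint (fun x => f x + g x) = iint f + iint g.
Proof.
move=> [a [b [La Lb Hf]]] [a' [b' [La' Lb' Hg]]].
have H : forall x, f x + g x = (a x + a' x) - (b x + b' x).
  by move=> x; rewrite Hf Hg; ring.
split; first by exists (fun x => a x + a' x), (fun x => b x + b' x); split => //; exact: Lfun_add.
rewrite (Good_iint _ _ H); try exact: Lfun_add.
rewrite (Good_iint La Lb Hf) (Good_iint La' Lb' Hg) !Lfun_add_iint //; ring.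
Qed.

Lemma Good_opp d (f : 'rV[R]_d -> R) : Good f ->
  Good (fun x => - f x) /\ iint (fun x => - f x) = - iint f.
Proof.
move=> [a [b [La Lb Hf]]].
have H : forall x, - f x = b x - a x by move=> x; rewrite Hf opprB.
split; first by exists b, a; split.
by rewrite (Good_iint Lb La H) (Good_iint La Lb Hf) opprB.
Qed.

Lemma Good_sub d (f g : 'rV[R]_d -> R) : Good f -> Good g ->
  Good (fun x => f x - g x) /\ iint (fun x => f x - g x) = iint f - iint g.
Proof.
move=> Gf Gg; have [Gg' Eg] := Good_opp Gg.
have [G1 E1] := Good_add Gf Gg'; by split => //; rewrite E1 Eg.
Qed.

Lemma Good_mono d (f g : 'rV[R]_d -> R) : Good f -> Good g -> (forall x, f x <= g x) ->
  iint f <= iint g.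
Proof.
move=> [a [b [La Lb Hf]]] [a' [b' [La' Lb' Hg]]] H.
rewrite (Good_iint La Lb Hf) (Good_iint La' Lb' Hg).
have : iint (fun x => a x + b' x) <= iint (fun x => a' x + b x).
  apply: Lfun_mono; try exact: Lfun_add.
  by move=> x; have := H x; rewrite Hf Hg => h; lra.
by rewrite !Lfun_add_iint // => h; lra.
Qed.


Definition openv d (S : set 'rV[R]_d) := forall x, S x ->
  exists2 del, 0 < del & forall y, nearv x y del -> S y.
Definition contv d (Q : 'rV[R]_d -> R) := forall x e, 0 < e ->
  exists2 del, 0 < del & forall y, nearv x y del -> `|Q y - Q x| < e.

Lemma indic_in d (S : set 'rV[R]_d) x : S x -> \1_S x = 1 :> R.
Proof. by move=> Sx; rewrite indicE mem_set. Qed.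
Lemma indic_out d (S : set 'rV[R]_d) x : ~ S x -> \1_S x = 0 :> R.
Proof. by move=> Sx; rewrite indicE memNset. Qed.

Lemma LF_ind d (S : set 'rV[R]_d) Q B0 M : 0 <= M -> openv S ->
  (forall x i, S x -> `|x 0 i| <= B0) -> contv Q -> (forall x, S x -> `|Q x| <= M) ->
  LF M B0 (fun x => \1_S x * Num.max (Q x) 0).
Proof.
move=> M0 oS bS cQ bQ; split.
- move=> x; have [Sx|Sx] := pselect (S x).
  + rewrite indic_in // mul1r le_max lexx orbT /= ge_max.
    have := bQ x Sx; have := normr_ge0 (Q x); have := ler_norm (Q x).
    by move=> h1 h2 h3; rewrite (le_trans h1 h3) (le_trans h2 h3).
  + by rewrite indic_out // mul0r lexx /=.
- move=> x i Hi; rewrite indic_out ?mul0r // => Sx.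
  by have := bS x i Sx; rewrite leNgt Hi.
- move=> x e e0; have [Sx|Sx] := pselect (S x).
  + have [d1 d10 H1] := oS x Sx; have [d2 d20 H2] := cQ x e e0.
    exists (Num.min d1 d2); first by rewrite lt_min d10 d20.
    move=> y Hy.
    have Hy1 : nearv x y d1 by apply: nearv_le Hy; rewrite ge_min lexx.
    have Hy2 : nearv x y d2 by apply: nearv_le Hy; rewrite ge_min lexx orbT.
    rewrite !indic_in ?mul1r //; last exact: H1.
    apply: maxr0_lsc => //.
    have := H2 y Hy2; rewrite ltr_norml => /andP[h1 h2]; lra.
  + exists 1 => // y _; rewrite indic_out // mul0r.
    apply: (@lt_le_trans _ _ 0); first by rewrite sub0r oppr_lt0.
    have [Sy|Sy] := pselect (S y).
      by rewrite indic_in // mul1r le_max lexx orbT.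
    by rewrite indic_out // mul0r.
Qed.


Lemma Good_ind d (S : set 'rV[R]_d) Q B0 M : openv S ->
  (forall x i, S x -> `|x 0 i| <= B0) -> contv Q -> (forall x, S x -> `|Q x| <= M) ->
  Good (fun x => \1_S x * Q x).
Proof.
move=> oS bS cQ bQ.
have M0 : 0 <= Num.max M 0 by rewrite le_max lexx orbT.
have bQ' : forall x, S x -> `|Q x| <= Num.max M 0.
  by move=> x Sx; rewrite le_max bQ.
have cQ' : contv (fun x => - Q x).
  by move=> x e e0; have [del d0 H] := cQ x e e0; exists del => // y Hy;
    rewrite -opprD normrN; exact: H.
have bQ'' : forall x, S x -> `|- Q x| <= Num.max M 0 by move=> x Sx; rewrite normrN; exact: bQ'.
exists (fun x => \1_S x * Num.max (Q x) 0), (fun x => \1_S x * Num.max (- Q x) 0).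
split.
- by exists (Num.max M 0), B0; exact: LF_ind.
- by exists (Num.max M 0), B0; exact: (LF_ind M0 oS bS cQ' bQ'').
- by move=> x; rewrite {1}(maxr0_sub (Q x)) mulrBr.
Qed.


Lemma min_le_l (a b : R) : Num.min a b <= a.
Proof. by rewrite ge_min lexx. Qed.
Lemma min_le_r (a b : R) : Num.min a b <= b.
Proof. by rewrite ge_min lexx orbT. Qed.

Lemma simplex_int_open d (x0 h : 'rV[R]_d) : (forall k, h 0 k != 0) ->
  openv (simplex_int x0 h).
Proof.
move=> hn x [t [tpos [tsum ->]]].
set X := x0 + \row_k (t 0 k * h 0 k).
set m1 := \big[Num.min/1]_k (t 0 k * `|h 0 k|).
set c := \sum_k `|h 0 k|^-1.
set S := \sum_k t 0 k.
set m2 := (1 - S) / (1 + c).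
have c0 : 0 <= c by apply: sumr_ge0 => k _; rewrite invr_ge0.
have c1 : 0 < 1 + c by lra.
have m10 : 0 < m1.
  by apply/bigmin_gtP; split => // k _; rewrite mulr_gt0 // normr_gt0.
have m20 : 0 < m2 by rewrite divr_gt0 // subr_gt0.
have hk : forall k, 0 < `|h 0 k| by move=> k; rewrite normr_gt0.
exists (Num.min m1 m2); first by rewrite lt_min m10 m20.
move=> y Hy.
pose z k := (y 0 k - X 0 k) / h 0 k.
have key : forall k, (y - x0) 0 k / h 0 k = t 0 k + z k.
  move=> k; rewrite /z /X !mxE; field; exact: hn.
have bnd : forall k, `|z k| < Num.min m1 m2 / `|h 0 k|.
  move=> k; rewrite /z normrM normfV ltr_pM2r ?invr_gt0 //; exact: (Hy k).
have bnd2 : forall k, Num.min m1 m2 / `|h 0 k| <= t 0 k.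
  move=> k; rewrite ler_pdivrMr //; apply: le_trans (min_le_l _ _) _.
  exact: bigmin_le.
exists (\row_k ((y - x0) 0 k / h 0 k)); split; [|split].
- move=> k; rewrite mxE key.
  have := lt_le_trans (bnd k) (bnd2 k); rewrite ltr_norml => /andP[h1 _].
  by have := tpos k => h2; lra.
- under eq_bigr do rewrite mxE key.
  rewrite big_split /= -/S.
  have Hz : \sum_k z k <= Num.min m1 m2 * c.
    rewrite /c mulr_sumr; apply: ler_sum => k _.
    by apply: le_trans (ler_norm _) _; apply: le_trans (ltW (bnd k)) _; rewrite mulrC.
  have Hm : Num.min m1 m2 * c <= m2 * c by apply: ler_wpM2r => //; exact: min_le_r.
  have : m2 * c < 1 - S.
    rewrite /m2 mulrAC ltr_pdivrMr //.
    have : 0 < 1 - S by rewrite subr_gt0.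
    move=> h1; nra.
  lra.
- apply/rowP => k; rewrite !mxE; field; exact: hn.
Qed.


Lemma derive_lin d (u : 'rV[R]_d -> R) x (v : 'rV[R]_d) (L : R) :
  (exists2 del, 0 < del & forall t : R, `|t| < del -> u (t *: v + x) = u x + t * L) ->
  'D_v u x = L.
Proof.
move=> [del del0 H].
rewrite /derive; apply: cvg_lim => //.
apply: cvg_near_cst.
apply/nbhs_ballP; exists del => //= t; rewrite -ball_normE /= sub0r normrN => Ht tn0.
rewrite /= H // addrC addKr.
by rewrite [X in X = _]/GRing.scale /= mulrA mulVf // mul1r.
Qed.


Definition affine d (p : 'rV[R]_d -> R) (c0 : R) (c : 'rV[R]_d) :=
  forall x, p x = c0 + \sum_j c 0 j * x 0 j.

Lemma sum_axis d (c : 'rV[R]_d) (t : R) i (x : 'rV[R]_d) :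
  \sum_j c 0 j * (t *: @axis R d i + x) 0 j = t * c 0 i + \sum_j c 0 j * x 0 j.
Proof.
under eq_bigr do rewrite !mxE mulrDr.
rewrite big_split /=; congr (_ + _).
rewrite (bigD1 i) //= big1 => [|j /negbTE ji]; last by rewrite ji mulr0 mulr0.
by rewrite eqxx /= mulr1 addr0 mulrC.
Qed.

Lemma grad_loc d (u p : 'rV[R]_d -> R) (S : set 'rV[R]_d) c0 c x :
  openv S -> S x -> (forall y, S y -> u y = p y) -> affine p c0 c -> grad u x = c.
Proof.
move=> oS Sx Hu Hp; apply/rowP => i; rewrite mxE.
apply: derive_lin.
have [del del0 Hd] := oS x Sx.
exists del => // t Ht.
have Sy : S (t *: @axis R d i + x).
  apply: Hd => j; rewrite !mxE addrK.
  by case: (_ && _) => /=; rewrite ?mulr1 ?mulr0 ?normr0.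
rewrite Hu // Hu // !Hp sum_axis; ring.
Qed.

Lemma grad_cst d (a : R) (x : 'rV[R]_d) : grad (fun _ => a) x = 0.
Proof. by apply/rowP => i; rewrite !mxE; exact: derive_cst. Qed.


Lemma affine_sub d (p q : 'rV[R]_d -> R) c0 c c0' c' : affine p c0 c -> affine q c0' c' ->
  affine (fun x => p x - q x) (c0 - c0') (c - c').
Proof.
move=> Hp Hq x; rewrite Hp Hq.
under [X in _ = _ + X]eq_bigr do rewrite !mxE mulrBl.
rewrite sumrB; ring.
Qed.

Lemma simplex_x0 d (x0 h : 'rV[R]_d) : simplex x0 h x0.
Proof.
exists 0; split; first by move=> k; rewrite mxE.
split; first by rewrite big1 // => k _; rewrite mxE.
by apply/rowP => k; rewrite !mxE mul0r addr0.
Qed.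

Lemma simplex_vtx d (x0 h : 'rV[R]_d) k : simplex x0 h (vtx x0 h k).
Proof.
exists (@axis R d k); split; first by move=> j; rewrite mxE; case: (_ && _).
split.
  rewrite (bigD1 k) //= big1 => [|j /negbTE jk]; last by rewrite mxE jk andbF.
  by rewrite mxE !eqxx addr0.
apply/rowP => j; rewrite !mxE; congr (_ + _).
by rewrite eqxx /=; case: eqP => [->|_]; rewrite ?mulr1 ?mul1r ?mulr0 ?mul0r.
Qed.

Lemma simplex_int_sub d (x0 h : 'rV[R]_d) : simplex_int x0 h `<=` simplex x0 h.
Proof.
move=> x [t [t0 [t1 ->]]]; exists t; split; first by move=> k; exact: ltW.
by split => //; exact: ltW.
Qed.

Lemma simplex_box d (x0 h : 'rV[R]_d) x i : simplex x0 h x ->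
  `|x 0 i| <= \sum_j (`|x0 0 j| + `|h 0 j|).
Proof.
move=> [t [t0 [t1 ->]]].
have ti : t 0 i <= 1.
  apply: le_trans t1; rewrite (bigD1 i) //= lerDl; apply: sumr_ge0 => j _; exact: t0.
rewrite (bigD1 i) //=.
apply: (@le_trans _ _ (`|x0 0 i| + `|h 0 i|)); last first.
  by rewrite lerDl; apply: sumr_ge0 => j _; rewrite addr_ge0.
rewrite !mxE; apply: le_trans (ler_normD _ _) _; rewrite lerD2l normrM.
by rewrite ger0_norm // ler_piMl.
Qed.

Lemma interp_affine d (x0 h : 'rV[R]_d) (F p : 'rV[R]_d -> R) c0 c :
  (forall k, h 0 k != 0) -> affine p c0 c -> F x0 = p x0 ->
  (forall k, F (vtx x0 h k) = p (vtx x0 h k)) -> forall x, interp x0 h F x = p x.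
Proof.
move=> hn Hp H0 Hv x; rewrite /interp H0.
under eq_bigr => k _.
  rewrite Hv /vtx (addrC x0) !Hp sum_axis.
  have -> : c0 + (h 0 k * c 0 k + \sum_j c 0 j * x0 0 j) - (c0 + \sum_j c 0 j * x0 0 j)
    = h 0 k * c 0 k by ring.
  rewrite !mxE.
  have E : h 0 k * c 0 k * ((x 0 k - x0 0 k) / h 0 k) = c 0 k * (x 0 k - x0 0 k).
    by field; exact: hn.
  rewrite E; over.
rewrite /= Hp Hp.
under eq_bigr do rewrite mulrBr.
rewrite sumrB; ring.
Qed.


Lemma mono1 d (a : {ffun 'I_d -> 'I_2}) (x : 'rV[R]_d) :
  (\sum_i (a i : nat) <= 1)%N ->
  \prod_i x 0 i ^+ a i = (1 - \sum_i (a i : nat)%:R) + \sum_i (a i : nat)%:R * x 0 i.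
Proof.
move=> Ha.
have [j Hj|H0] := pickP (fun j => (a j : nat) != 0%N); last first.
  have H0' : forall i, (a i : nat) = 0%N by move=> i; have := H0 i => /= /negbFE /eqP.
  rewrite big1 => [|i _]; last by rewrite H0' expr0.
  rewrite big1 => [|i _]; last by rewrite H0'.
  rewrite big1 => [|i _]; last by rewrite H0' mul0r.
  by rewrite subr0 addr0.
have aj : (a j : nat) = 1%N by have := ltn_ord (a j); move: Hj; case: (a j : nat) => [|[|]].
have Hoth : forall i, i != j -> (a i : nat) = 0%N.
  move=> i ij; move: Ha; rewrite (bigD1 j) //= aj (bigD1 i) //=.
  by case: (a i : nat).
rewrite (bigD1 j) //= big1 => [|i ij]; last by rewrite Hoth // expr0.
rewrite (bigD1 j) //= big1 => [|i ij]; last by rewrite Hoth.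
rewrite (bigD1 j) //= big1 => [|i ij]; last by rewrite Hoth // mul0r.
by rewrite aj expr1 mulr1 addr0 mul1r addr0 subrr add0r.
Qed.

Lemma poly1_affine d (p : 'rV[R]_d -> R) : is_poly_le 1 p -> exists c0 c, affine p c0 c.
Proof.
move=> [c Hc].
exists (\sum_(a : {ffun 'I_d -> 'I_2} | (\sum_i (a i : nat) <= 1)%N) c a * (1 - \sum_i (a i : nat)%:R)).
exists (\row_i \sum_(a : {ffun 'I_d -> 'I_2} | (\sum_i (a i : nat) <= 1)%N) c a * (a i : nat)%:R).
move=> x; rewrite Hc.
under eq_bigr => a Ha do rewrite mono1 // mulrDr mulr_sumr.
rewrite big_split /=; congr (_ + _).
rewrite exchange_big /=; apply: eq_bigr => i _.
by rewrite mxE mulr_suml; apply: eq_bigr => a _; rewrite mulrA.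
Qed.


Lemma sum_pred1 (I : finType) (P : pred I) (b : I) (F : I -> R) : P b ->
  \sum_(a | P a) (a == b)%:R * F a = F b.
Proof.
move=> Pb; rewrite (bigD1 b) //= eqxx mul1r big1 ?addr0 // => a /andP[_ /negbTE ->].
by rewrite mul0r.
Qed.

Lemma affine_poly d k (p : 'rV[R]_d -> R) c0 c : (1 <= k)%N -> affine p c0 c ->
  is_poly_le k p.
Proof.
move=> k1 Hp.
pose e0 : {ffun 'I_d -> 'I_k.+1} := [ffun _ => ord0].
pose ej (j : 'I_d) : {ffun 'I_d -> 'I_k.+1} := [ffun i => if i == j then inord 1 else ord0].
exists (fun a => c0 * (a == e0)%:R + \sum_j c 0 j * (a == ej j)%:R).
move=> x; rewrite Hp; apply/esym.
under eq_bigr do rewrite mulrDl mulr_suml.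
rewrite big_split /=; congr (_ + _).
  under eq_bigr do rewrite -mulrA.
  rewrite -mulr_sumr sum_pred1.
    by rewrite big1 ?mulr1 // => i _; rewrite ffunE expr0.
  by rewrite big1 // => i _; rewrite ffunE.
rewrite exchange_big /=; apply: eq_bigr => j _.
under eq_bigr do rewrite -mulrA.
rewrite -mulr_sumr sum_pred1.
  congr (_ * _); rewrite (bigD1 j) //= ffunE eqxx inordK // expr1 big1 ?mulr1 //.
  by move=> i /negbTE ij; rewrite ffunE ij expr0.
rewrite (bigD1 j) //= ffunE eqxx inordK // big1 ?addn0 // => i /negbTE ij.
by rewrite ffunE ij.
Qed.


Definition nice d (Q : 'rV[R]_d -> R) := contv Q /\
  forall B : R, exists M : R, forall x : 'rV[R]_d, (forall i, `|x 0 i| <= B) -> `|Q x| <= M.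

Lemma nice_cst d (a : R) : nice (fun _ : 'rV[R]_d => a).
Proof.
split; first by move=> x e e0; exists 1 => // y _; rewrite subrr normr0.
by move=> B; exists `|a|.
Qed.

Lemma nice_add d (Q1 Q2 : 'rV[R]_d -> R) : nice Q1 -> nice Q2 -> nice (fun x => Q1 x + Q2 x).
Proof.
move=> [c1 b1] [c2 b2]; split.
- move=> x e e0; have e20 : 0 < e / 2 by rewrite divr_gt0.
  have [d1 d10 H1] := c1 x _ e20; have [d2 d20 H2] := c2 x _ e20.
  exists (Num.min d1 d2); first by rewrite lt_min d10 d20.
  move=> y Hy.
  have := H1 y (nearv_le (min_le_l _ _) Hy); have := H2 y (nearv_le (min_le_r _ _) Hy).
  move=> h2 h1; have -> : Q1 y + Q2 y - (Q1 x + Q2 x) = (Q1 y - Q1 x) + (Q2 y - Q2 x) by ring.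
  apply: le_lt_trans (ler_normD _ _) _; lra.
- move=> B; have [M1 HM1] := b1 B; have [M2 HM2] := b2 B; exists (M1 + M2) => x Hx.
  by apply: le_trans (ler_normD _ _) _; rewrite lerD // ?HM1 ?HM2.
Qed.

Lemma pos1 (z : R) : 0 < `|z| + 1.
Proof. by apply: ltr_wpDl => //. Qed.

Lemma nice_mul d (Q1 Q2 : 'rV[R]_d -> R) : nice Q1 -> nice Q2 -> nice (fun x => Q1 x * Q2 x).
Proof.
move=> [c1 b1] [c2 b2]; split.
- move=> x e e0.
  set a := Q1 x; set b := Q2 x.
  have ea : 0 < e / (2 * (`|b| + 1)) by rewrite divr_gt0 // mulr_gt0 // ltr_wpDl.
  have eb : 0 < Num.min 1 (e / (2 * (`|a| + 1))).
    by rewrite lt_min ltr01 /= divr_gt0 // mulr_gt0 // ltr_wpDl.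
  have [d1 d10 H1] := c1 x _ ea; have [d2 d20 H2] := c2 x _ eb.
  exists (Num.min d1 d2); first by rewrite lt_min d10 d20.
  move=> y Hy.
  have h1 := H1 y (nearv_le (min_le_l _ _) Hy); have h2 := H2 y (nearv_le (min_le_r _ _) Hy).
  have h2a : `|Q2 y - b| < 1 := lt_le_trans h2 (min_le_l _ _).
  have h2b : `|Q2 y - b| < e / (2 * (`|a| + 1)) := lt_le_trans h2 (min_le_r _ _).
  have -> : Q1 y * Q2 y - a * b = (Q1 y - a) * Q2 y + a * (Q2 y - b) by ring.
  apply: le_lt_trans (ler_normD _ _) _; rewrite !normrM.
  have nQ2 : `|Q2 y| <= `|b| + 1.
    have -> : Q2 y = b + (Q2 y - b) by ring.
    by apply: le_trans (ler_normD _ _) _; rewrite lerD2l ltW.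
  have t1 : `|Q1 y - a| * `|Q2 y| <= e / 2.
    apply: le_trans (ler_wpM2l (normr_ge0 _) nQ2) _.
    apply: le_trans (ler_wpM2r _ (ltW h1)) _; first exact: ltW (pos1 _).
    by rewrite invfM -mulrA mulfVK // gt_eqF // pos1.
  have t2 : `|a| * `|Q2 y - b| < e / 2.
    have na : 0 <= `|a| := normr_ge0 _.
    have : `|a| * `|Q2 y - b| <= `|a| * (e / (2 * (`|a| + 1))).
      by apply: ler_wpM2l => //; exact: ltW.
    move=> h; apply: le_lt_trans h _.
    have E : `|a| * (e / (2 * (`|a| + 1))) = e / 2 * (`|a| / (`|a| + 1)).
      by field; rewrite gt_eqF ?pos1.
    rewrite E gtr_pMr ?divr_gt0 //.
    by rewrite ltr_pdivrMr ?pos1 // mul1r ltrDl.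
  lra.
- move=> B; have [M1 HM1] := b1 B; have [M2 HM2] := b2 B; exists (M1 * M2) => x Hx.
  rewrite normrM; apply: ler_pM => //; [exact: HM1 | exact: HM2].
Qed.

Lemma nice_coord d (j : 'I_d) : nice (fun x : 'rV[R]_d => x 0 j).
Proof.
split; first by move=> x e e0; exists e => // y Hy; exact: Hy.
by move=> B; exists B => x Hx; exact: Hx.
Qed.

Lemma nice_sum d (I : Type) (s : seq I) (F : I -> 'rV[R]_d -> R) :
  (forall i, nice (F i)) -> nice (fun x => \sum_(i <- s) F i x).
Proof.
move=> HF; elim: s => [|i s IH].
  have -> : (fun x => \sum_(i <- [::]) F i x) = (fun _ => 0).
    by apply: funext => x; rewrite big_nil.
  exact: nice_cst.
have -> : (fun x => \sum_(j <- i :: s) F j x) = (fun x => F i x + \sum_(j <- s) F j x).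
  by apply: funext => x; rewrite big_cons.
exact: nice_add.
Qed.

Lemma nice_affine d (p : 'rV[R]_d -> R) c0 c : affine p c0 c -> nice p.
Proof.
move=> Hp.
have -> : p = (fun x => c0 + \sum_j c 0 j * x 0 j) by apply: funext => x; rewrite Hp.
apply: nice_add; first exact: nice_cst.
apply: (@nice_sum d _ _ (fun j x => c 0 j * x 0 j)) => j.
apply: nice_mul; [exact: nice_cst | exact: nice_coord].
Qed.


Lemma dFc (eta p : R) : derive1 (Fc eta) p =
  (4 * eta ^+ 2)^-1 * (4 * p ^+ 3 - 6 * p ^+ 2 + 3 * p).
Proof.
pose P : {poly R} := (4 * eta ^+ 2)^-1 *: ('X^4 - 2%:P * 'X^3 + (3 / 2)%:P * 'X^2).
have -> : Fc eta = horner P by apply: funext => x; rewrite /Fc /P !hornerE.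
rewrite -derive.derivE /P.
rewrite !(derivZ, derivD, derivB, derivN, derivXn, derivM, derivC, derivX) /=.
by rewrite !hornerE /=; congr (_ * _); field.
Qed.

Lemma dFe (eta p : R) : derive1 (Fe eta) p = - (8 * eta ^+ 2)^-1 * (2 * p).
Proof.
pose P : {poly R} := (- (8 * eta ^+ 2)^-1) *: 'X^2.
have -> : Fe eta = horner P by apply: funext => x; rewrite /Fe /P !hornerE.
rewrite -derive.derivE /P.
rewrite !(derivZ, derivD, derivB, derivN, derivXn, derivM, derivC, derivX) /=.
by rewrite !hornerE /=; ring.
Qed.

Lemma ineqF (eta a b : R) : 0 < eta ->
  Fdw eta b - Fdw eta a <= (derive1 (Fc eta) b + derive1 (Fe eta) a) * (b - a).
Proof.
move=> eta0; rewrite dFc dFe /Fdw.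
set K := (4 * eta ^+ 2)^-1.
have K0 : 0 < K by rewrite invr_gt0 mulr_gt0 // exprn_gt0.
have -> : (8 * eta ^+ 2)^-1 = K / 2 by rewrite /K invfM -[8]/(2 * 4)%:R natrM; field;
  rewrite gt_eqF ?exprn_gt0.
rewrite -subr_ge0.
have -> : (K * (4 * b ^+ 3 - 6 * b ^+ 2 + 3 * b) + - (K / 2) * (2 * a)) * (b - a) -
   (K * (b ^+ 2 * (b - 1) ^+ 2) - K * (a ^+ 2 * (a - 1) ^+ 2)) =
   K * ((a - b) ^+ 2 * ((a + b - 1) ^+ 2 + (2 * b - 1) ^+ 2 / 2 + 1 / 2)).
  by field.
apply: mulr_ge0; first exact: ltW.
apply: mulr_ge0; first exact: sqr_ge0.
by rewrite !addr_ge0 ?sqr_ge0 ?divr_ge0 ?sqr_ge0.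
Qed.

Lemma ineqG d (c c' : 'rV[R]_d) :
  1 / 2 * dotv c c - 1 / 2 * dotv c' c' <= dotv c (c - c').
Proof.
rewrite /dotv !mulr_sumr -sumrB; apply: ler_sum => i _; rewrite !mxE.
rewrite -subr_ge0.
have -> : c 0 i * (c 0 i - c' 0 i) - (1 / 2 * (c 0 i * c 0 i) - 1 / 2 * (c' 0 i * c' 0 i))
  = (c 0 i - c' 0 i) ^+ 2 / 2 by field.
by rewrite divr_ge0 ?sqr_ge0.
Qed.


Lemma nice_opp d (Q : 'rV[R]_d -> R) : nice Q -> nice (fun x => - Q x).
Proof.
move=> HQ; have -> : (fun x => - Q x) = (fun x => (-1) * Q x).
  by apply: funext => x; rewrite mulN1r.
by apply: nice_mul => //; exact: nice_cst.
Qed.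

Lemma nice_sub d (Q1 Q2 : 'rV[R]_d -> R) : nice Q1 -> nice Q2 -> nice (fun x => Q1 x - Q2 x).
Proof. by move=> H1 H2; apply: nice_add => //; exact: nice_opp. Qed.

Lemma nice_pow d (Q : 'rV[R]_d -> R) n : nice Q -> nice (fun x => Q x ^+ n).
Proof.
move=> HQ; elim: n => [|n IH].
  have -> : (fun x => Q x ^+ 0) = (fun _ => 1) by apply: funext => x; rewrite expr0.
  exact: nice_cst.
have -> : (fun x => Q x ^+ n.+1) = (fun x => Q x * Q x ^+ n).
  by apply: funext => x; rewrite exprS.
exact: nice_mul.
Qed.

Lemma Good_ext d (f g : 'rV[R]_d -> R) : (forall x, f x = g x) -> Good g -> Good f.
Proof. by move=> H [a [b [La Lb Hg]]]; exists a, b; split => // x; rewrite H. Qed.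

Lemma GoodS d (x0 h : 'rV[R]_d) (Q : 'rV[R]_d -> R) : (forall k, h 0 k != 0) -> nice Q ->
  Good (fun x => \1_(simplex_int x0 h) x * Q x).
Proof.
move=> hn [cQ bQ].
set B0 := \sum_j (`|x0 0 j| + `|h 0 j|).
have [M HM] := bQ B0.
apply: (@Good_ind _ _ _ B0 M).
- exact: simplex_int_open.
- by move=> x i Sx; apply: simplex_box; exact: simplex_int_sub.
- exact: cQ.
- move=> x Sx; apply: HM => i; apply: simplex_box; exact: simplex_int_sub.
Qed.

Lemma int_on_ext d (S : set 'rV[R]_d) (u Q : 'rV[R]_d -> R) :
  (forall x, S x -> u x = Q x) -> int_on S u = iint (fun x => \1_S x * Q x).
Proof.
move=> H; rewrite /int_on; congr iint; apply: funext => x.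
have [Sx|Sx] := pselect (S x); first by rewrite H.
by rewrite !indic_out // !mul0r.
Qed.

Definition aff_on d (x0 h : 'rV[R]_d) (phi : 'rV[R]_d -> R) :=
  exists p c0 c, affine p c0 c /\ forall x, simplex x0 h x -> phi x = p x.

Lemma elem_mass d (x0 h : 'rV[R]_d) (phi1 phin : 'rV[R]_d -> R) :
  (forall k, h 0 k != 0) -> aff_on x0 h phi1 -> aff_on x0 h phin ->
  int_on (simplex_int x0 h) (interp x0 h (fun x => (phi1 x - phin x) * 1)) =
  int_on (simplex_int x0 h) phi1 - int_on (simplex_int x0 h) phin.
Proof.
move=> hn [p1 [c01 [c1 [A1 E1]]]] [pn [c0n [cn [An En]]]].
have Ad := affine_sub A1 An.
have Hi : forall x, interp x0 h (fun x => (phi1 x - phin x) * 1) x = p1 x - pn x.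
  apply: (interp_affine hn Ad).
    by rewrite mulr1 E1 ?En //; exact: simplex_x0.
  by move=> k; rewrite mulr1 E1 ?En //; exact: simplex_vtx.
have n1 := nice_affine A1; have nn := nice_affine An.
rewrite (@int_on_ext _ _ _ (fun x => p1 x - pn x)); last by move=> x _; exact: Hi.
rewrite (@int_on_ext _ _ phi1 p1); last by move=> x Sx; apply: E1; exact: simplex_int_sub.
rewrite (@int_on_ext _ _ phin pn); last by move=> x Sx; apply: En; exact: simplex_int_sub.
have [_ <-] := Good_sub (GoodS x0 hn n1) (GoodS x0 hn nn).
by congr iint; apply: funext => x; rewrite mulrBr.
Qed.

Lemma int_on_zero d (S : set 'rV[R]_d) (u : 'rV[R]_d -> R) :
  (forall x, u x = 0) -> int_on S u = 0.
Proof.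
move=> H; rewrite /int_on -(iint0 d); congr iint; apply: funext => x.
by rewrite H mulr0.
Qed.


Ltac nice_tac Hp :=
  repeat first [ apply: nice_add | apply: nice_sub | apply: nice_mul
               | apply: nice_pow | exact: nice_cst | exact: (nice_affine Hp) ].

Lemma nice_Fdw d eta (p : 'rV[R]_d -> R) c0 c : affine p c0 c ->
  nice (fun x => Fdw eta (p x)).
Proof.
move=> Hp; rewrite /Fdw.
apply: nice_mul; first exact: nice_cst.
apply: nice_mul; first exact: nice_pow (nice_affine Hp).
apply: nice_pow; apply: nice_sub; [exact: nice_affine Hp | exact: nice_cst].
Qed.

Lemma nice_C d eta (p q : 'rV[R]_d -> R) c0 c c0' c' : affine p c0 c -> affine q c0' c' ->
  nice (fun x => (derive1 (Fc eta) (p x) + derive1 (Fe eta) (q x)) * (p x - q x)).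
Proof.
move=> Hp Hq.
have -> : (fun x => (derive1 (Fc eta) (p x) + derive1 (Fe eta) (q x)) * (p x - q x)) =
  (fun x => ((4 * eta ^+ 2)^-1 * (4 * p x ^+ 3 - 6 * p x ^+ 2 + 3 * p x) +
             - (8 * eta ^+ 2)^-1 * (2 * q x)) * (p x - q x)).
  by apply: funext => x; rewrite dFc dFe.
have np := nice_affine Hp; have nq := nice_affine Hq.
apply: nice_mul; last exact: nice_sub.
apply: nice_add; apply: nice_mul; try exact: nice_cst.
- apply: nice_add; last by apply: nice_mul; [exact: nice_cst|exact: np].
  apply: nice_sub; apply: nice_mul; try exact: nice_cst; exact: nice_pow.
- by apply: nice_mul; [exact: nice_cst|exact: nq].
Qed.

Lemma elem_energy d eta (x0 h : 'rV[R]_d) (phi1 phin : 'rV[R]_d -> R) (S : set 'rV[R]_d) :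
  0 < eta -> (forall k, h 0 k != 0) -> aff_on x0 h phi1 -> aff_on x0 h phin ->
  S = simplex_int x0 h ->
  int_on S (fun x => 1 / 2 * dotv (grad phi1 x) (grad phi1 x) + Fdw eta (phi1 x)) -
  int_on S (fun x => 1 / 2 * dotv (grad phin x) (grad phin x) + Fdw eta (phin x)) <=
  int_on S (fun x => dotv (grad phi1 x) (grad (fun y => phi1 y - phin y) x)) +
  int_on S (fun x => (derive1 (Fc eta) (phi1 x) + derive1 (Fe eta) (phin x)) * (phi1 x - phin x)).
Proof.
move=> eta0 hn [p1 [c01 [c1 [A1 E1]]]] [pn [c0n [cn [An En]]]] HS.
have oS : openv S by rewrite HS; exact: (simplex_int_open hn).
have E1' : forall x, S x -> phi1 x = p1 x by rewrite HS => x Sx; apply: E1; exact: simplex_int_sub.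
have En' : forall x, S x -> phin x = pn x by rewrite HS => x Sx; apply: En; exact: simplex_int_sub.
have Ad := affine_sub A1 An.
have G1 : forall x, S x -> grad phi1 x = c1 by move=> x Sx; exact: grad_loc oS Sx E1' A1.
have Gn : forall x, S x -> grad phin x = cn by move=> x Sx; exact: grad_loc oS Sx En' An.
have Gd : forall x, S x -> grad (fun y => phi1 y - phin y) x = c1 - cn.
  move=> x Sx; apply: grad_loc oS Sx _ Ad => y Sy; rewrite E1' ?En'//.
pose QA1 x := 1 / 2 * dotv c1 c1 + Fdw eta (p1 x).
pose QAn x := 1 / 2 * dotv cn cn + Fdw eta (pn x).
pose QB (x : 'rV[R]_d) := dotv c1 (c1 - cn).
pose QC x := (derive1 (Fc eta) (p1 x) + derive1 (Fe eta) (pn x)) * (p1 x - pn x).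
rewrite (@int_on_ext _ _ _ QA1); last by move=> x Sx; rewrite G1 // E1'.
rewrite (@int_on_ext _ _ _ QAn); last by move=> x Sx; rewrite Gn // En'.
rewrite (@int_on_ext _ _ _ QB); last by move=> x Sx; rewrite G1 // Gd.
rewrite (@int_on_ext _ _ _ QC); last by move=> x Sx; rewrite E1' // En'.
rewrite HS.
have gA1 : Good (fun x => \1_(simplex_int x0 h) x * QA1 x).
  by apply: GoodS => //; apply: nice_add; [exact: nice_cst | exact: nice_Fdw A1].
have gAn : Good (fun x => \1_(simplex_int x0 h) x * QAn x).
  by apply: GoodS => //; apply: nice_add; [exact: nice_cst | exact: nice_Fdw An].
have gB : Good (fun x => \1_(simplex_int x0 h) x * QB x) by apply: GoodS => //; exact: nice_cst.
have gC : Good (fun x => \1_(simplex_int x0 h) x * QC x) by apply: GoodS => //; exact: nice_C A1 An.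
have [gD <-] := Good_sub gA1 gAn.
have [gE <-] := Good_add gB gC.
apply: Good_mono => // x.
rewrite -mulrBr -mulrDr; apply: ler_wpM2l.
  by rewrite indicE; case: (_ \in _).
rewrite /QA1 /QAn /QB /QC.
have h1 := ineqG c1 cn; have h2 := ineqF (pn x) (p1 x) eta0.
lra.
Qed.

End Integ.

Unset Implicit Arguments.
Unset Strict Implicit.

Theorem lemma6 (R : realType) (d : nat) (E : finType)
  (x0 h : E -> 'rV[R]_d) (Omega : set 'rV[R]_d) (k : nat)
  (eta eps T : R) (N : nat)
  (phin phi1 mu1 : 'rV[R]_d -> R) :
  (1 <= d <= 3)%N ->
  structured_triangulation x0 h Omega ->
  (1 <= k)%N ->
  0 < eta -> 0 < eps -> eps < 1 / 2 ->
  0 < T -> (0 < N)%N ->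
  let dt := T / N%:R in
  pw_poly 1 x0 h phin ->
  pw_poly 1 x0 h phi1 ->
  pw_poly k x0 h mu1 ->
  (forall mub : 'rV[R]_d -> R, pw_poly k x0 h mub ->
     dt^-1 * lumped x0 h (fun x => phi1 x - phin x) mub
     + Mform eps x0 h phi1 mu1 mub = 0) ->
  (forall phib : 'rV[R]_d -> R, pw_poly 1 x0 h phib ->
     intO x0 h (fun x => dotv (grad phi1 x) (grad phib x))
     + intO x0 h (fun x => (derive1 (Fc eta) (phi1 x) + derive1 (Fe eta) (phin x)) * phib x)
     = lumped x0 h mu1 phib) ->
  intO x0 h phi1 = intO x0 h phin /\
  (energy eta x0 h phi1 - energy eta x0 h phin) / dt
    + Mform eps x0 h phi1 mu1 mu1 <= 0.
Proof.
move=> d13 [hn _ _] k1 eta0 eps0 epsh T0 N0 dt Hphin Hphi1 Hmu1 H1 H2.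
have dt0 : 0 < dt by rewrite /dt divr_gt0 // ltr0n.
have aff : forall phi, pw_poly 1 x0 h phi -> forall e, aff_on (x0 e) (h e) phi.
  move=> phi Hp e; have [p [Pp Ep]] := Hp e; have [c0 [c Ac]] := poly1_affine Pp.
  by exists p, c0, c.
have pw_aff : forall phi k', (1 <= k')%N -> (forall e, aff_on (x0 e) (h e) phi) ->
    pw_poly k' x0 h phi.
  move=> phi k' k'1 Ha e; have [p [c0 [c [Ac Ep]]]] := Ha e.
  by exists p; split => //; exact: affine_poly k'1 Ac.
have aff1 := aff _ Hphi1; have affn := aff _ Hphin.
have affd : forall e, aff_on (x0 e) (h e) (fun x => phi1 x - phin x).
  move=> e; have [p1 [c01 [c1 [A1 E1]]]] := aff1 e; have [pn [c0n [cn [An En]]]] := affn e.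
  exists (fun x => p1 x - pn x), (c01 - c0n), (c1 - cn); split; first exact: affine_sub.
  by move=> x Sx; rewrite E1 ?En.
have affc : forall e, aff_on (x0 e) (h e) (fun _ => 1 : R).
  move=> e; exists (fun _ => 1), 1, 0; split => // x.
  by rewrite big1 ?addr0 // => i _; rewrite mxE mul0r.
split.
  have Hm := H1 (fun _ => 1) (pw_aff _ _ k1 affc).
  have M0 : Mform eps x0 h phi1 mu1 (fun _ => 1) = 0.
    rewrite /Mform big1 // => e _; apply: int_on_zero => x.
    rewrite big1 // => i _; rewrite grad_cst.
    have -> : (0 : 'rV[R]_d) 0 i = 0 by rewrite mxE.
    by rewrite mulr0.
  have L0 : lumped x0 h (fun x => phi1 x - phin x) (fun _ => 1) = intO x0 h phi1 - intO x0 h phin.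
    rewrite /lumped /intO -sumrB; apply: eq_bigr => e _.
    exact: elem_mass (hn e) (aff1 e) (affn e).
  move: Hm; rewrite M0 L0 addr0 => /eqP; rewrite mulf_eq0 invr_eq0 (gt_eqF dt0) /=.
  by rewrite subr_eq0 => /eqP.
have Hb := H2 (fun x => phi1 x - phin x) (pw_aff _ _ (leqnn 1) affd).
have Hmu := H1 mu1 Hmu1.
have Ee : energy eta x0 h phi1 - energy eta x0 h phin <=
    lumped x0 h mu1 (fun x => phi1 x - phin x).
  rewrite -Hb /energy /intO -sumrB -big_split; apply: ler_sum => e _.
  exact: elem_energy eta0 (hn e) (aff1 e) (affn e) erefl.
have LC : lumped x0 h mu1 (fun x => phi1 x - phin x) =
          lumped x0 h (fun x => phi1 x - phin x) mu1.
  rewrite /lumped; apply: eq_bigr => e _; congr int_on; congr interp.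
  by apply: funext => x; exact: mulrC.
rewrite LC in Ee.
have -> : Mform eps x0 h phi1 mu1 mu1 = - (dt^-1 * lumped x0 h (fun x => phi1 x - phin x) mu1).
  by apply/eqP; rewrite -addr_eq0 addrC; apply/eqP; exact: Hmu.
rewrite subr_le0 mulrC ler_wpM2l // invr_ge0; exact: ltW.
Qed.
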